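(* Let $\tilde n\ge 1$, and let $\mathbf{S}_{i^*},\mathbf{S}_{2}\in\mathbb{R}^{\tilde n\times\tilde n}$ be two real matrices (the graph matrix of the reference view and the graph matrix of the view to be aligned). Let $\boldsymbol{\Delta}=\{\mathbf{P}\in[0,1]^{\tilde n\times\tilde n}:\ \mathbf{P}\mathbf{1}=\mathbf{1},\ \mathbf{P}^{\top}\mathbf{1}=\mathbf{1}\}$ be the set of doubly stochastic matrices, and let $\boldsymbol{\Gamma}:\mathbb{R}^{\tilde n\times\tilde n}\to\boldsymbol{\Delta}$ be the Euclidean (Frobenius-norm) projection onto $\boldsymbol{\Delta}$. Starting from any $\mathbf{P}^{(0)}\in\boldsymbol{\Delta}$, define the iterates $$\mathbf{P}^{(t+1)}=\tfrac12\Big(\mathbf{P}^{(t)}+\boldsymbol{\Gamma}\big(\mathbf{S}_{2}\,\mathbf{P}^{(t)}\,\mathbf{S}_{i^*}^{\top}\big)\Big),\qquad t=0,1,2,\dots$$ Suppose there is a constant $\varepsilon\ge 0$ such that $\|\mathbf{S}_{i^*}\otimes\mathbf{S}_{2}\|_2\le\varepsilon$, where $\otimes$ is the Kronecker product and $\|\cdot\|_2$ the spectral norm. Then the iteration converges at rate $\tfrac12+\varepsilon$, i.e. for every $t\ge1$, $$\|\mathbf{P}^{(t+1)}-\mathbf{P}^{(t)}\|_F\le\Big(\tfrac12+\varepsilon\Big)\|\mathbf{P}^{(t)}-\mathbf{P}^{(t-1)}\|_F .$$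
   Context: This iteration is a projected fixed-point scheme for the relaxed graph-matching problem $\max_{\mathbf{P}\in\boldsymbol{\Delta}}\operatorname{Tr}(\mathbf{S}_{i^*}^{\top}\mathbf{P}^{\top}\mathbf{S}_{2}\mathbf{P})$, whose gradient (up to a constant) is $\mathbf{S}_{2}\mathbf{P}\mathbf{S}_{i^*}^{\top}$. $\|\cdot\|_F$ denotes the Frobenius norm. *)

(* Defs.v *)
From mathcomp Require Import all_boot all_order all_algebra.
From mathcomp Require Import mxtens.
From mathcomp Require Import classical_sets reals.
Set Implicit Arguments. Unset Strict Implicit. Unset Printing Implicit Defensive.
Import Order.TTheory GRing.Theory Num.Theory.
Local Open Scope ring_scope.

Definition frob {R : realType} {m n : nat} (A : 'M[R]_(m, n)) : R :=
  Num.sqrt (\sum_(i < m) \sum_(j < n) A i j ^+ 2).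

Definition specnorm {R : realType} {m n : nat} (M : 'M[R]_(m, n)) : R :=
  sup [set frob (M *m v) | v in [set v : 'cV[R]_n | frob v <= 1]]%classic.

(* Kronecker product (standard: (A (x) B)_{(i1,i2),(j1,j2)} = A i1 j1 * B i2 j2). *)
Definition kron {R : realType} {m n p q : nat} (A : 'M[R]_(m, n)) (B : 'M[R]_(p, q))
  : 'M[R]_(m * p, n * q) := tensmx A B.

Definition doubly_stochastic {R : realType} {n : nat} (P : 'M[R]_n) : Prop :=
  (forall i j, 0 <= P i j <= 1) /\
  (forall i, \sum_(j < n) P i j = 1) /\
  (forall j, \sum_(i < n) P i j = 1).

Definition is_proj_DS {R : realType} {n : nat} (Gamma : 'M[R]_n -> 'M[R]_n) : Prop :=
  forall X : 'M[R]_n, doubly_stochastic (Gamma X) /\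
    (forall Q : 'M[R]_n, doubly_stochastic Q -> frob (X - Gamma X) <= frob (X - Q)).

(* Main.v *)
Require Import Defs.
From mathcomp Require Import all_boot all_order all_algebra.
From mathcomp Require Import mxtens.
From mathcomp Require Import classical_sets reals.
From mathcomp Require Import ring lra.
Import Order.TTheory GRing.Theory Num.Theory.
Local Open Scope ring_scope.

Section Aux.
Variable R : realType.

Definition sq {m n : nat} (A : 'M[R]_(m, n)) : R := \sum_(i < m) \sum_(j < n) A i j ^+ 2.
Definition dotm {m n : nat} (A B : 'M[R]_(m, n)) : R := \sum_(i < m) \sum_(j < n) A i j * B i j.

Lemma sq_ge0 {m n} (A : 'M[R]_(m, n)) : 0 <= sq A.
Proof. by apply: sumr_ge0 => i _; apply: sumr_ge0 => j _; exact: sqr_ge0. Qed.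

Lemma frobE {m n} (A : 'M[R]_(m, n)) : frob A = Num.sqrt (sq A).
Proof. by []. Qed.

Lemma frob_ge0 {m n} (A : 'M[R]_(m, n)) : 0 <= frob A.
Proof. exact: sqrtr_ge0. Qed.

Lemma frob_sq {m n} (A : 'M[R]_(m, n)) : frob A ^+ 2 = sq A.
Proof. by rewrite frobE sqr_sqrtr // sq_ge0. Qed.

Lemma cs (I : finType) (a b : I -> R) :
  (\sum_i a i * b i) ^+ 2 <= (\sum_i a i ^+ 2) * (\sum_i b i ^+ 2).
Proof.
set A := \sum_i a i ^+ 2; set B := \sum_i b i ^+ 2; set C := \sum_i a i * b i.
have hA : 0 <= A by apply: sumr_ge0 => i _; exact: sqr_ge0.
have hB : 0 <= B by apply: sumr_ge0 => i _; exact: sqr_ge0.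
have key : 0 <= B * (A * B - C ^+ 2).
  have : 0 <= \sum_i (B * a i - C * b i) ^+ 2 by apply: sumr_ge0 => i _; exact: sqr_ge0.
  rewrite (eq_bigr (fun i => B ^+ 2 * a i ^+ 2 - (2 * B * C) * (a i * b i) + C ^+ 2 * b i ^+ 2));
    last by move=> i _; ring.
  rewrite big_split /= sumrB -!mulr_sumr -/A -/B -/C.
  by have -> : B ^+ 2 * A - 2 * B * C * C + C ^+ 2 * B = B * (A * B - C ^+ 2) by ring.
have [B0|Bpos] := eqVneq B 0.
  have b0 : forall i, b i = 0.
    move=> i; apply/eqP; rewrite -sqrf_eq0; apply/eqP.
    exact: (psumr_eq0P (fun j _ => sqr_ge0 (b j)) B0).
  have -> : C = 0 by rewrite /C big1 // => i _; rewrite b0 mulr0.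
  by rewrite expr0n /= B0 mulr0.
have Bp : 0 < B by rewrite lt_def Bpos hB.
by move: key; rewrite pmulr_rge0 // subr_ge0.
Qed.

Lemma pair_sum {m n} (F : 'I_m -> 'I_n -> R) :
  \sum_(i < m) \sum_(j < n) F i j = \sum_(p : 'I_m * 'I_n) F p.1 p.2.
Proof. by rewrite pair_big. Qed.

Lemma dotm_cs {m n} (A B : 'M[R]_(m, n)) : dotm A B ^+ 2 <= sq A * sq B.
Proof. by rewrite /dotm /sq !pair_sum; apply: cs. Qed.

Lemma dotm_le {m n} (A B : 'M[R]_(m, n)) : dotm A B <= frob A * frob B.
Proof.
have h := dotm_cs A B; rewrite -!frob_sq -exprMn in h.
have hy : 0 <= frob A * frob B by rewrite mulr_ge0 ?frob_ge0.
move: h hy; set x := dotm A B; set y := frob A * frob B => h hy. nra.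
Qed.

Lemma sqD {m n} (A B : 'M[R]_(m, n)) : sq (A + B) = sq A + 2 * dotm A B + sq B.
Proof.
rewrite /sq /dotm mulr_sumr -!big_split; apply: eq_bigr => i _.
rewrite mulr_sumr -!big_split /=; apply: eq_bigr => j _; rewrite !mxE; ring.
Qed.

Lemma sqZ {m n} c (A : 'M[R]_(m, n)) : sq (c *: A) = c ^+ 2 * sq A.
Proof.
rewrite /sq mulr_sumr; apply: eq_bigr => i _.
rewrite mulr_sumr; apply: eq_bigr => j _; rewrite !mxE; ring.
Qed.

Lemma le_frob {m n p q} (A : 'M[R]_(m, n)) (B : 'M[R]_(p, q)) c :
  0 <= c -> sq A <= c ^+ 2 * sq B -> frob A <= c * frob B.
Proof.
move=> c0 h; rewrite frobE.
have -> : c * frob B = Num.sqrt (c ^+ 2 * sq B).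
  by rewrite sqrtrM ?sqr_ge0 // sqrtr_sqr ger0_norm.
by rewrite ler_sqrt // mulr_ge0 ?sqr_ge0 ?sq_ge0.
Qed.

Lemma frobZ {m n} c (A : 'M[R]_(m, n)) : frob (c *: A) = `|c| * frob A.
Proof. by rewrite !frobE sqZ sqrtrM ?sqr_ge0 // sqrtr_sqr. Qed.

Lemma frobD {m n} (A B : 'M[R]_(m, n)) : frob (A + B) <= frob A + frob B.
Proof.
have hs : 0 <= frob A + frob B by rewrite addr_ge0 ?frob_ge0.
rewrite frobE -[frob A + frob B]ger0_norm // -sqrtr_sqr ler_sqrt ?sqr_ge0 //.
rewrite sqD -!frob_sq; have := dotm_le A B; have := frob_ge0 A; have := frob_ge0 B.
nra.
Qed.


Lemma dotmZr {m n} c (A B : 'M[R]_(m, n)) : dotm A (c *: B) = c * dotm A B.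
Proof.
rewrite /dotm mulr_sumr; apply: eq_bigr => i _.
rewrite mulr_sumr; apply: eq_bigr => j _; rewrite !mxE; ring.
Qed.

Lemma ds_convex {n} (p q : 'M[R]_n) s : doubly_stochastic p -> doubly_stochastic q ->
  0 <= s <= 1 -> doubly_stochastic (p + s *: (q - p)).
Proof.
move=> [p01 [pr pc]] [q01 [qr qc]] /andP[s0 s1]; split; [|split].
- move=> i j; rewrite !mxE; have /andP[? ?] := p01 i j; have /andP[? ?] := q01 i j.
  apply/andP; split; nra.
- move=> i; rewrite (eq_bigr (fun j => p i j + s * (q i j - p i j))); last by move=> j _; rewrite !mxE.
  by rewrite big_split /= -mulr_sumr sumrB pr qr subrr mulr0 addr0.
- move=> j; rewrite (eq_bigr (fun i => p i j + s * (q i j - p i j))); last by move=> i _; rewrite !mxE.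
  by rewrite big_split /= -mulr_sumr sumrB pc qc subrr mulr0 addr0.
Qed.

Lemma proj_var {n} (G : 'M[R]_n -> 'M[R]_n) x q : is_proj_DS G -> doubly_stochastic q ->
  dotm (x - G x) (q - G x) <= 0.
Proof.
move=> hG hq; have [hp hmin] := hG x.
set p := G x in hp hmin *; set U := x - p; set V := q - p.
set c := dotm U V; set B := sq V.
have hB : 0 <= B := sq_ge0 V.
have key : forall s, 0 < s -> s <= 1 -> 2 * c <= s * B.
  move=> s s0 s1.
  have h := hmin _ (@ds_convex _ p q s hp hq (introT andP (conj (ltW s0) s1))).
  have e : x - (p + s *: (q - p)) = U + (- s) *: V by rewrite /U /V scaleNr opprD addrA.
  rewrite e !frobE ler_sqrt ?sq_ge0 // (sqD U) sqZ dotmZr -/c -/B in h.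
  nra.
rewrite leNgt; apply/negP => c0.
have cB : 0 < c + B by lra.
set s := c / (c + B).
have es : s * (c + B) = c by rewrite /s divfK // gt_eqF.
have s0 : 0 < s by rewrite /s divr_gt0.
have s1 : s <= 1 by nra.
have := key s s0 s1; nra.
Qed.

Lemma ident {m n} (x y p q : 'M[R]_(m, n)) :
  sq (x - y) = sq (p - q) + sq ((x - y) - (p - q)) - 2 * dotm (x - p) (q - p)
     - 2 * dotm (y - q) (p - q).
Proof.
rewrite /sq /dotm !mulr_sumr -!big_split /= -!sumrB; apply: eq_bigr => i _.
rewrite !mulr_sumr -!big_split /= -!sumrB; apply: eq_bigr => j _; rewrite !mxE; ring.
Qed.

Lemma proj_nonexp {n} (G : 'M[R]_n -> 'M[R]_n) x y : is_proj_DS G ->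
  frob (G x - G y) <= frob (x - y).
Proof.
move=> hG; have h1 := proj_var G x (G y) hG (proj1 (hG y)); have h2 := proj_var G y (G x) hG (proj1 (hG x)).
rewrite -[frob (x - y)]mul1r; apply: le_frob => //.
rewrite (ident x y (G x) (G y)) expr1n mul1r.
have := sq_ge0 ((x - y) - (G x - G y)); lra.
Qed.

Definition vecT {n} (M : 'M[R]_n) : 'cV[R]_(n * n) :=
  \col_k M (mxtens_unindex k).2 (mxtens_unindex k).1.

Lemma sum_tens m n (F : 'I_(m * n) -> R) :
  \sum_k F k = \sum_(i < m) \sum_(j < n) F (mxtens_index (i, j)).
Proof.
rewrite pair_sum (reindex (@mxtens_index m n)) /=;
  last exact: onW_bij (Bijective (@mxtens_indexK m n) (@mxtens_unindexK m n)).
by apply: eq_bigr => -[i j] _.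
Qed.

Lemma sq_vecT {n} (M : 'M[R]_n) : sq (vecT M) = sq M.
Proof.
rewrite /sq sum_tens exchange_big /=; apply: eq_bigr => i _; apply: eq_bigr => j _.
by rewrite big_ord1 !mxE mxtens_indexK.
Qed.

Lemma frob_vecT {n} (M : 'M[R]_n) : frob (vecT M) = frob M.
Proof. by rewrite !frobE sq_vecT. Qed.

Lemma kron_vecT {n} (A B D : 'M[R]_n) : kron A B *m vecT D = vecT (B *m D *m A^T).
Proof.
apply/matrixP => k l; case: (mxtens_indexP k) => i1 i2.
rewrite /kron !mxE sum_tens !mxtens_indexK /=.
apply: eq_bigr => j1 _; rewrite !mxE mulr_suml; apply: eq_bigr => j2 _.
rewrite tensmxE !mxE mxtens_indexK /=; ring.
Qed.

Lemma mulmx_frob N (M : 'M[R]_(N, N)) (v : 'cV[R]_N) : frob (M *m v) <= frob M * frob v.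
Proof.
rewrite frobE -[frob M * frob v]ger0_norm ?mulr_ge0 ?frob_ge0 // -sqrtr_sqr.
rewrite ler_sqrt ?sqr_ge0 // exprMn !frob_sq /sq mulr_suml; apply: ler_sum => i _.
rewrite big_ord1 !mxE.
under [X in _ <= _ * X]eq_bigr do rewrite big_ord1.
exact: cs.
Qed.

Lemma spec_bound N (M : 'M[R]_(N, N)) (w : 'cV[R]_N) :
  frob (M *m w) <= specnorm M * frob w.
Proof.
have hub : has_ubound [set frob (M *m v) | v in [set v : 'cV[R]_N | frob v <= 1]]%classic.
  exists (frob M) => y [v hv hy].
  rewrite -hy (le_trans (mulmx_frob _ M v)) //.
  by rewrite -[X in _ <= X]mulr1 ler_wpM2l ?frob_ge0.
have [d0|dpos] := eqVneq (frob w) 0.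
  by rewrite d0 mulr0; have := mulmx_frob _ M w; rewrite d0 mulr0.
have dp : 0 < frob w by rewrite lt_def dpos frob_ge0.
have hin : frob (M *m ((frob w)^-1 *: w)) <= specnorm M.
  apply: (ub_le_sup hub); exists ((frob w)^-1 *: w) => //.
  by rewrite /= frobZ ger0_norm ?invr_ge0 ?frob_ge0 // mulVf.
rewrite -scalemxAr frobZ ger0_norm ?invr_ge0 ?frob_ge0 // in hin.
by rewrite -ler_pdivrMr // mulrC.
Qed.

End Aux.

Lemma step_eq (R : realType) n (P1 P0 G1 G0 : 'M[R]_n) :
  P1 = 2^-1 *: (P0 + G0) ->
  2^-1 *: (P1 + G1) - P1 = 2^-1 *: (P1 - P0) + 2^-1 *: (G1 - G0).
Proof. by move=> ->; apply/matrixP => i j; rewrite !mxE; ring. Qed.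

Theorem theorem1 (R : realType) (n : nat) (hn : (1 <= n)%N)
  (Si S2 : 'M[R]_n) (Gamma : 'M[R]_n -> 'M[R]_n) (eps : R) (P : nat -> 'M[R]_n) :
  is_proj_DS Gamma ->
  doubly_stochastic (P 0%N) ->
  (forall t : nat, P t.+1 = 2^-1 *: (P t + Gamma (S2 *m P t *m Si^T))) ->
  0 <= eps ->
  specnorm (kron Si S2) <= eps ->
  forall t : nat, (1 <= t)%N ->
    frob (P t.+1 - P t) <= (2^-1 + eps) * frob (P t - P t.-1).
Proof.
move=> hG _ hP heps hK [//|t] _ /=.
rewrite [P t.+2]hP (@step_eq _ _ _ _ _ _ (hP t)).
set D := P t.+1 - P t.
set E := Gamma _ - Gamma _.
have hE : frob E <= eps * frob D.
  rewrite (le_trans (proj_nonexp _ _ _ _ hG)) //.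
  rewrite -mulmxBl -mulmxBr -frob_vecT -kron_vecT.
  rewrite (le_trans (spec_bound _ _ _ _)) //.
  by rewrite frob_vecT ler_wpM2r ?frob_ge0.
rewrite (le_trans (frobD _ _ _)) //.
rewrite !frobZ ger0_norm ?invr_ge0 ?ler0n //.
have := frob_ge0 _ D; move: hE heps.
set h := (2 : R)^-1; have h0 : 0 <= h by rewrite invr_ge0 ler0n.
have h1 : h <= 1 by rewrite invf_le1 ?ler1n ?ltr0n.
move=> hE he hD.
have ha : 0 <= eps * frob D by rewrite mulr_ge0.
have hb : h * frob E <= h * (eps * frob D) by rewrite ler_wpM2l.
rewrite mulrDl; move: ha hb; set a := eps * frob D; set fE := h * frob E.
nra.
Qed.
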